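(* Let $\Lambda$ be a countable index set and let $\{y_\lambda\}_{\lambda\in\Lambda}\subseteq\mathbb R^n$ satisfy: (a) for every compact $K\subseteq\mathbb R^n$ there is $C_K>0$ with $\sup_{x\in\mathbb R^n}|\{\lambda\in\Lambda: x\in y_\lambda+K\}|\le C_K$; (b) there is a bounded open neighbourhood $U$ of the origin with $\mathbb R^n=\bigcup_{\lambda\in\Lambda}(y_\lambda+U)$. Then for every $h>0$ and $\varepsilon>0$ there is $R>0$ such that $$\sup_{\mu\in\Lambda}\sum_{\{\lambda\in\Lambda:\,|y_\lambda-y_\mu|>R\}}e^{-A(h|y_\lambda-y_\mu|)}\le\varepsilon.$$
   Context: $\{A_p\}_{p\in\mathbb N}$ is a sequence of positive numbers with $A_0=A_1=1$ satisfying (M.1) $A_p^2\le A_{p-1}A_{p+1}$ ($p\ge1$), (M.2) $A_{p+q}\le c_0H^{p+q}A_pA_q$ for some $c_0,H\ge1$, (M.6) $p!\le c_0L_0^pA_p$ for some $c_0,L_0\ge1$, and (M.2)$^*$: $2m_p\le m_{pN}$ for $p\ge p_0$, some $p_0,N\in\mathbb Z_+$, where $m_j=A_j/A_{j-1}$. Its associated function is $A(\rho)=\sup_{p\in\mathbb N}\ln(\rho^p/A_p)$, $\rho\ge0$. *)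

(* Defs.v *)
From HB Require Import structures.
From mathcomp Require Import all_boot all_order all_algebra.
From mathcomp Require Import all_classical all_reals all_analysis.
Set Implicit Arguments. Unset Strict Implicit. Unset Printing Implicit Defensive.
Import Order.TTheory GRing.Theory Num.Theory.
Import numFieldNormedType.Exports.
Local Open Scope ring_scope.
Local Open Scope classical_set_scope.

Definition eucl {R : realType} {n : nat} (v : 'rV[R]_n) : R :=
  Num.sqrt (\sum_(i < n) v ord0 i ^+ 2).

Definition mseq {R : realType} (A : nat -> R) (j : nat) : R := A j / A j.-1.

Definition assoc_term {R : realType} (A : nat -> R) (rho : R) (p : nat) : \bar R :=
  if 0 < rho ^+ p / A p then (ln (rho ^+ p / A p))%:E else -oo%E.

Definition assocA {R : realType} (A : nat -> R) (rho : R) : \bar R :=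
  ereal_sup [set assoc_term A rho p | p in [set: nat]].

(* Main.v *)
Require Import Defs.
From HB Require Import structures.
From mathcomp Require Import all_boot all_order all_algebra.
From mathcomp Require Import all_classical all_reals all_analysis.
From mathcomp Require Import ring lra.
Import Order.TTheory GRing.Theory Num.Theory.
Import numFieldNormedType.Exports.
Local Open Scope ring_scope.
Local Open Scope classical_set_scope.

Section Helpers.
Context {R : realType}.

Lemma key_ineq (a : R) : 1 <= a -> ((a + 1) ^+ 2)^-1 + (a + 1)^-1 <= a^-1.
Proof.
move=> a1; rewrite -subr_ge0.
have -> : a^-1 - (((a + 1) ^+ 2)^-1 + (a + 1)^-1) = (a * (a + 1) ^+ 2)^-1.
  field; apply/andP; split; apply/negP => /eqP; lra.
rewrite invr_ge0; apply: mulr_ge0; [lra | exact: sqr_ge0].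
Qed.

Lemma sum_inv_sq (M : nat) : \sum_(k < M) (((k%:R : R) + 1) ^+ 2)^-1 <= 2.
Proof.
suff H : forall m, \sum_(k < m.+1) (((k%:R : R) + 1) ^+ 2)^-1 + (m.+1%:R)^-1 <= 2.
  case: M => [|m]; first by rewrite big_ord0; lra.
  apply: le_trans (H m); rewrite lerDl invr_ge0; exact: ler0n.
elim=> [|m IH]; first by rewrite big_ord1 /= add0r expr1n invr1; lra.
rewrite big_ord_recr /=; apply: le_trans IH; rewrite -addrA lerD2l.
rewrite natr1 -[m.+2%:R]natr1; apply: key_ineq.
by rewrite ler1n.
Qed.

Lemma coord_le_eucl {n} (v : 'rV[R]_n) i : `|v ord0 i| <= eucl v.
Proof.
rewrite /eucl -sqrtr_sqr ler_sqrt; last by apply: sumr_ge0 => j _; exact: sqr_ge0.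
rewrite (bigD1 i) //= lerDl; apply: sumr_ge0 => j _; exact: sqr_ge0.
Qed.

Lemma term_bound (A : nat -> R) rho p : (forall p, 0 < A p) -> 0 < rho ->
  (expeR (- assocA A rho) <= (A p / rho ^+ p)%:E)%E.
Proof.
move=> Ap r0.
have q0 : 0 < rho ^+ p / A p by rewrite divr_gt0 // exprn_gt0.
have H : ((ln (rho ^+ p / A p))%:E <= assocA A rho)%E.
  rewrite /assocA; apply: ereal_sup_ubound; exists p => //; by rewrite /assoc_term q0.
apply: (@le_trans _ _ (expeR (- (ln (rho ^+ p / A p))%:E))).
  by rewrite lee_expeR leeN2.
by rewrite /= lee_fin expRN lnK ?posrE // invf_div.
Qed.

Lemma natr_count (T : Type) (s : seq T) (a : pred T) :
  \sum_(l <- s) ((a l)%:R : R) = (count a s)%:R.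
Proof. by elim: s => [|x s IH]; rewrite ?big_nil ?big_cons //= IH natrD. Qed.

Lemma count_bound (n : nat) (T : eqType) (v : T -> 'rV[R]_n) (CK Rr : R) (s : seq T) :
  0 <= CK -> 1 <= Rr ->
  (forall (x : 'rV[R]_n) (s' : seq T), uniq s' ->
     (forall l, l \in s' -> forall i, `|x ord0 i - v l ord0 i| <= 1) ->
     (size s')%:R <= CK) ->
  uniq s -> (forall l, l \in s -> Rr < eucl (v l)) ->
  \sum_(l <- s) (eucl (v l) ^+ (2 * n).+1)^-1 <= CK * 16 ^+ n / Rr.
Proof.
move=> CK0 R1 Ha us Hs.
pose d := fun l => eucl (v l).
pose M := (\max_(l <- s) (Num.truncn (d l)).+1)%N.
have dM : forall l, l \in s -> d l < M%:R.
  move=> l ls; apply: lt_le_trans (truncnS_gt (d l)) _; rewrite ler_nat.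
  exact: (@leq_bigmax_seq _ s xpredT (fun l => (Num.truncn (d l)).+1) l).
pose u (b : bool) (t : R) := if b then t else - t.
pose P (z : {ffun 'I_n -> bool * 'I_M}) (l : T) :=
  [forall i, ((z i).2%:R <= u (z i).1 (v l ord0 i)) && (u (z i).1 (v l ord0 i) < (z i).2%:R + 1)].
pose g (j : bool * 'I_M) := 4 / (((j.2 : nat)%:R : R) + 1) ^+ 2.
pose G (z : {ffun 'I_n -> bool * 'I_M}) := \prod_i g (z i).
have g0 : forall j, 0 <= g j.
  by move=> j; apply: divr_ge0; [exact: ler0n | exact: sqr_ge0].
have G0 : forall z, 0 <= G z by move=> z; apply: prodr_ge0 => i _.
have R0 : 0 < Rr by lra.
have ex : forall l, l \in s -> exists z, P z l.
  move=> l ls.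
  have Hk : forall i, (Num.truncn `|v l ord0 i| < M)%N.
    move=> i; rewrite truncn_lt_nat //; move: (coord_le_eucl (v l) i) (dM _ ls); rewrite /d => h1 h2; lra.
  exists [ffun i => (0 <= v l ord0 i, Ordinal (Hk i))].
  apply/forallP => i; rewrite ffunE /=.
  have -> : u (0 <= v l ord0 i) (v l ord0 i) = `|v l ord0 i|.
    by rewrite /u; case: ifP => h; [rewrite ger0_norm | rewrite ltr0_norm // ltNge h].
  by rewrite natr1 truncn_itv.
have termG : forall l z, l \in s -> P z l -> (d l ^+ (2 * n).+1)^-1 <= G z / Rr.
  move=> l z ls /forallP Pz.
  have dR : Rr < d l := Hs l ls.
  have d0 : 0 < d l by lra.
  rewrite exprS invfM mulrC; apply: ler_pM.
  - by rewrite invr_ge0 exprn_ge0 // ltW.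
  - by rewrite invr_ge0 ltW.
  - rewrite exprM -[n in _ ^+ n]card_ord -prodr_const -prodfV; apply: ler_prod => i _.
    rewrite invr_ge0 sqr_ge0 /= /g -[4 / _]invf_div lef_pV2 ?posrE; last 2 first.
    + by rewrite exprn_gt0.
    + by apply: divr_gt0 => //; rewrite exprn_gt0 // ltr_wpDl.
    have /andP[h1 h2] := Pz i.
    have hk : ((z i).2%:R : R) <= d l.
      apply: le_trans h1 _; apply: le_trans (coord_le_eucl (v l) i).
      by rewrite /u; case: (z i).1; [exact: ler_norm | rewrite -normrN; exact: ler_norm].
    have hk0 : (0 : R) <= (z i).2%:R by exact: ler0n.
    rewrite ler_pdivrMr //; nra.
  - by rewrite lef_pV2 ?posrE // ltW.
apply: (@le_trans _ _ (\sum_(l <- s) \sum_z (P z l)%:R * (G z / Rr))).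
  rewrite big_seq [X in _ <= X]big_seq; apply: ler_sum => l ls.
  have [z Pz] := ex l ls.
  rewrite (bigD1 z) //= Pz mul1r; apply: le_trans (termG l z ls Pz) _.
  rewrite lerDl; apply: sumr_ge0 => z' _; apply: mulr_ge0; first exact: ler0n.
  by apply: divr_ge0 => //; exact: ltW.
rewrite exchange_big /=.
apply: (@le_trans _ _ (\sum_z CK * (G z / Rr))).
  apply: ler_sum => z _; rewrite -mulr_suml natr_count.
  apply: ler_wpM2r; first by apply: divr_ge0 => //; exact: ltW.
  rewrite -size_filter; apply: Ha (\row_i u (z i).1 (z i).2%:R) _ _ _.
    exact: filter_uniq.
  move=> l; rewrite mem_filter => /andP[/forallP Pz ls] i; rewrite mxE.
  have /andP[h1 h2] := Pz i; move: h1 h2; rewrite /u.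
  by case: (z i).1 => h1 h2; rewrite ler_norml; apply/andP; split; lra.
rewrite -mulr_sumr -mulr_suml mulrA ler_wpM2r //; first by rewrite invr_ge0 ltW.
apply: ler_wpM2l => //.
have -> : \sum_z G z = \prod_(i < n) \sum_(j : bool * 'I_M) g j.
  by rewrite bigA_distr_bigA.
rewrite prodr_const card_ord; apply: lerXn2r.
- by rewrite nnegrE; apply: sumr_ge0.
- by rewrite nnegrE.
rewrite -(pair_bigA _ (fun b k => g (b, k))) /= big_bool /=.
have -> : \sum_(k < M) g (true, k) = 4 * \sum_(k < M) (((k%:R : R) + 1) ^+ 2)^-1.
  by rewrite mulr_sumr.
have := sum_inv_sq M; lra.
Qed.

End Helpers.
Theorem lemma3p16 (R : realType) (A : nat -> R) (n : nat)
  (Lam : countType) (y : Lam -> 'rV[R]_n) :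
  (forall p, 0 < A p) -> A 0%N = 1 -> A 1%N = 1 ->
  (* (M.1) *)
  (forall p : nat, (1 <= p)%N -> A p ^+ 2 <= A p.-1 * A p.+1) ->
  (* (M.2) *)
  (exists c0 H : R, 1 <= c0 /\ 1 <= H /\
     forall p q : nat, A (p + q)%N <= c0 * H ^+ (p + q) * A p * A q) ->
  (* (M.6) *)
  (exists c0 L0 : R, 1 <= c0 /\ 1 <= L0 /\
     forall p : nat, (p`!)%:R <= c0 * L0 ^+ p * A p) ->
  (* (M.2)^* *)
  (exists p0 N : nat, (0 < p0)%N /\ (0 < N)%N /\
     forall p : nat, (p0 <= p)%N -> 2 * mseq A p <= mseq A (p * N)%N) ->
  (* (a) *)
  (forall K : set 'rV[R]_n, compact K ->
     exists CK : R, 0 < CK /\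
       forall (x : 'rV[R]_n) (s : seq Lam), uniq s ->
         (forall l, l \in s -> exists2 k, K k & x = y l + k) ->
         (size s)%:R <= CK) ->
  (* (b) *)
  (exists U : set 'rV[R]_n, open U /\ U 0 /\
     (exists M : R, forall u, U u -> eucl u <= M) /\
     forall x : 'rV[R]_n, exists l : Lam, exists2 u, U u & x = y l + u) ->
  forall h eps : R, 0 < h -> 0 < eps ->
  exists Rr : R, 0 < Rr /\
    forall mu : Lam,
      (\esum_(l in [set l | (Rr < eucl (y l - y mu))%R])
          expeR (- assocA A (h * eucl (y l - y mu))%R) <= eps%:E)%E.
Proof.
move=> Apos _ _ _ _ _ _ Ha _ h eps h0 e0.
pose K := [set w : 'rV[R]_n | forall i, `[(-1 : R), 1]%classic (w ord0 i)].
have cK : compact K.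
  by apply: (@rV_compact _ _ (fun=> `[(-1 : R), 1]%classic)) => _; exact: segment_compact.
have [CK [CK0 HCK]] := Ha K cK.
pose p := (2 * n).+1%N.
pose Kc := A p / h ^+ p * (CK * 16 ^+ n).
have Kc0 : 0 <= Kc.
  apply: mulr_ge0; first by apply: divr_ge0; [exact: ltW | rewrite exprn_ge0 // ltW].
  by apply: mulr_ge0; [exact: ltW | rewrite exprn_ge0].
have KcE : 0 <= Kc / eps by apply: divr_ge0 => //; exact: ltW.
exists (1 + Kc / eps); split; first lra.
move=> mu.
apply: ge_ereal_sup => _ [X [Xfin XS] <-].
rewrite fsbig_finite //=.
set s := finmap.enum_fset _.
have us : uniq s := finmap.fset_uniq _.
have Hs : forall l, l \in s -> 1 + Kc / eps < eucl (y l - y mu).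
  move=> l; rewrite in_fset_set // inE => /XS; done.
rewrite big_seq.
apply: (@le_trans _ _ (\sum_(l <- s | l \in s) (A p / (h * eucl (y l - y mu)) ^+ p)%:E)%E).
  apply: lee_sum => l ls; apply: term_bound => //.
  apply: mulr_gt0 => //; have := Hs l ls; lra.
rewrite sumEFin lee_fin -big_seq.
under eq_bigr => l _ do rewrite exprMn invfM mulrA.
rewrite -mulr_sumr.
have H1 : 1 <= 1 + Kc / eps by lra.
have Hb : forall (x : 'rV[R]_n) (s' : seq Lam), uniq s' ->
     (forall l, l \in s' -> forall i, `|x ord0 i - (y l - y mu) ord0 i| <= 1) ->
     (size s')%:R <= CK.
  move=> x s' us' Hx; apply: (HCK (y mu + x) s' us') => l ls'.
  exists (y mu + x - y l); last by rewrite addrCA subrr addr0.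
  move=> i; have := Hx l ls' i; rewrite !mxE /= ler_norml.
  move=> /andP[a b]; rewrite in_itv /=; apply/andP; split; lra.
have H := @count_bound _ n Lam (fun l => y l - y mu) CK (1 + Kc / eps) s (ltW CK0) H1 Hb us Hs.
apply: le_trans (ler_wpM2l _ H) _.
  by apply: divr_ge0; [exact: ltW | rewrite exprn_ge0 // ltW].
rewrite mulrA -/Kc ler_pdivrMr; last lra.
rewrite mulrDr mulr1 [eps * _]mulrC divfK; first lra.
by apply/negP => /eqP; lra.
Qed.
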